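(* Let $g\ge1$, $n=g+1$, $B\in\mathbb Z^{g\times n}$ with $B_{i,1}=1$, $B_{i,i+1}=-1$ and other entries $0$, and $Q=BB^T$. Let $k\in\{1,\dots,g\}$ and $\mathbf a\in[\mathbf k]$. Then the polytope $B^T(D_{\mathbf a,Q})$ (the convex hull of $\{B^T\mathbf c:\mathbf c\in\mathcal D_{\mathbf a,Q}\}$) is combinatorially equivalent to the hypersimplex $\Delta_{k,n}$.
   Context: $V_Q=\{\mathbf a\in\mathbb R^g:\ \mathbf a^TQ\mathbf a\le(\mathbf a-\mathbf c)^TQ(\mathbf a-\mathbf c)\ \forall\mathbf c\in\mathbb Z^g\}$; for $k=1,\dots,g$, $[\mathbf k]\subset\mathbb R^g$ is the set of vectors with entries in $\{-\tfrac{k}{g+1},\tfrac{g+1-k}{g+1}\}$ having either $k$ or $k-1$ entries equal to $\tfrac{g+1-k}{g+1}$; these are vertices of $V_Q$. For a vertex $\mathbf a$, $\mathcal D_{\mathbf a,Q}=\{\mathbf c\in\mathbb Z^g:\ \mathbf a^TQ\mathbf a=(\mathbf a-\mathbf c)^TQ(\mathbf a-\mathbf c)\}$ and $D_{\mathbf a,Q}$ is its convex hull. The hypersimplex is $\Delta_{k,n}=\mathrm{Conv}\{\sum_{i\in I}\mathbf e_i: I\subset[n],|I|=k\}\subset\mathbb R^n$. *)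

(* Defs.v *)
From HB Require Import structures.
From mathcomp Require Import all_boot all_order all_algebra.
From mathcomp Require Import boolp classical_sets reals.
Set Implicit Arguments. Unset Strict Implicit. Unset Printing Implicit Defensive.
Import Order.TTheory GRing.Theory Num.Theory.
Local Open Scope ring_scope.
Local Open Scope classical_set_scope.

Section Defs.
Variable R : realType.

(* B in Z^{g x (g+1)} (entries cast to R): B_{i,1} = 1, B_{i,i+1} = -1
   (1-based); 0-based: column 0 is 1, column i+1 is -1. *)
Definition Bmat (g : nat) : 'M[R]_(g, g.+1) :=
  \matrix_(i < g, j < g.+1)
    (((nat_of_ord j == 0)%N)%:R - ((nat_of_ord j == i.+1)%N)%:R).

Definition Qmat (g : nat) : 'M[R]_g := Bmat g *m (Bmat g)^T.

Definition qform (g : nat) (Q : 'M[R]_g) (x : 'cV[R]_g) : R :=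
  ((x^T *m Q *m x) 0 0).

Definition intvec (g : nat) (c : 'cV[int]_g) : 'cV[R]_g :=
  map_mx (fun z : int => z%:~R) c.

Definition calD (g : nat) (a : 'cV[R]_g) (Q : 'M[R]_g) : set 'cV[int]_g :=
  [set c | qform Q a = qform Q (a - intvec c)].

Definition kclass (g k : nat) : set 'cV[R]_g :=
  [set a | (forall i : 'I_g,
              a i 0 = - (k%:R / g.+1%:R) \/ a i 0 = (g.+1 - k)%:R / g.+1%:R)
         /\ (#|[set i : 'I_g | a i 0 == (g.+1 - k)%:R / g.+1%:R]| = k
             \/ #|[set i : 'I_g | a i 0 == (g.+1 - k)%:R / g.+1%:R]| = k.-1)].

Definition conv (n : nat) (S : set 'cV[R]_n) : set 'cV[R]_n :=
  [set x | exists (s : seq 'cV[R]_n) (w : seq R),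
      [/\ size w = size s, (forall v, v \in s -> S v),
          (forall t, t \in w -> 0 <= t), \sum_(t <- w) t = 1 &
          x = \sum_(i < size s) w`_i *: s`_i]].

(* faces of P (including the empty face and P itself):
   F = P ∩ {x | w.x = c} for a valid inequality w.x <= c on P *)
Definition is_face (n : nat) (P F : set 'cV[R]_n) : Prop :=
  exists (w : 'cV[R]_n) (c : R),
    (forall x, P x -> (w^T *m x) 0 0 <= c) /\
    F = [set x | P x /\ (w^T *m x) 0 0 = c].

Definition comb_equiv (n m : nat) (P : set 'cV[R]_n) (P' : set 'cV[R]_m) : Prop :=
  exists f : set 'cV[R]_n -> set 'cV[R]_m,
    [/\ (forall F, is_face P F -> is_face P' (f F)),
        (forall G, is_face P' G -> exists2 F, is_face P F & f F = G) &
        (forall F1 F2, is_face P F1 -> is_face P F2 ->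
            (F1 `<=` F2 <-> f F1 `<=` f F2))].

Definition hypersimplex (k n : nat) : set 'cV[R]_n :=
  conv [set x | exists I : {set 'I_n}, #|I| = k /\
                  x = \col_(i < n) ((i \in I)%:R : R)].

Definition BT_D (g : nat) (a : 'cV[R]_g) : set 'cV[R]_g.+1 :=
  conv [set (Bmat g)^T *m intvec c | c in calD a (Qmat g)].

End Defs.

Arguments kclass R g k _ : clear implicits.
Arguments hypersimplex R k n _ : clear implicits.

(* Main.v *)
Require Import Defs.
From HB Require Import structures.
From mathcomp Require Import all_boot all_order all_algebra.
From mathcomp Require Import boolp classical_sets reals.
From mathcomp Require Import ring lra zify.
Set Implicit Arguments. Unset Strict Implicit. Unset Printing Implicit Defensive.
Import Order.TTheory GRing.Theory Num.Theory.
Local Open Scope ring_scope.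
Local Open Scope classical_set_scope.

Lemma BT0 (R : realType) g (x : 'cV[R]_g) :
  ((Bmat R g)^T *m x) ord0 0 = \sum_i x i 0.
Proof.
rewrite !mxE; apply: eq_bigr => i _; rewrite !mxE /=; by rewrite subr0 mul1r.
Qed.

Lemma BTS (R : realType) g (x : 'cV[R]_g) i :
  ((Bmat R g)^T *m x) (lift ord0 i) 0 = - x i 0.
Proof.
rewrite !mxE (bigD1 i) //= big1 ?addr0.
  by rewrite !mxE /= eqxx sub0r mulN1r.
move=> j ji; rewrite !mxE /= eqSS.
by rewrite (_ : (i == j :> nat) = false) ?subr0 ?mul0r // ; apply/negbTE; rewrite eq_sym.
Qed.

Lemma BTsum (R : realType) g (x : 'cV[R]_g) :
  \sum_j ((Bmat R g)^T *m x) j 0 = 0.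
Proof.
rewrite big_ord_recl BT0 -big_split /= big1 // => i _; by rewrite BTS subrr.
Qed.

Lemma qformE (R : realType) g (x : 'cV[R]_g) :
  qform (Qmat R g) x = \sum_j (((Bmat R g)^T *m x) j 0) ^+ 2.
Proof.
rewrite /qform /Qmat !mulmxA.
have -> : x^T *m Bmat R g = ((Bmat R g)^T *m x)^T by rewrite trmx_mul trmxK.
rewrite -mulmxA !mxE; apply: eq_bigr => j _; by rewrite !mxE expr2.
Qed.

Lemma core (R : realType) n (p d u : 'cV[R]_n) (kap : R) :
  (forall j, p j 0 = kap - u j 0) -> \sum_j d j 0 = 0 ->
  (\sum_j (p j 0)^+2 = \sum_j (p j 0 - d j 0)^+2) <->
  (\sum_j (d j 0 + u j 0)^+2 = \sum_j (u j 0)^+2).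
Proof.
move=> hp hd.
have E : \sum_j (p j 0 - d j 0)^+2 - \sum_j (p j 0)^+2 =
   (\sum_j (d j 0 + u j 0)^+2 - \sum_j (u j 0)^+2) - (2 * kap) * \sum_j d j 0.
  rewrite -!sumrB mulr_sumr -sumrB; apply eq_bigr => j _; rewrite hp; ring.
rewrite hd mulr0 subr0 in E.
split => h.
  by apply/eqP; rewrite -subr_eq0 -E h subrr.
by apply/eqP; rewrite eq_sym -subr_eq0 E h subrr.
Qed.

Lemma card_sum (R : realType) n (I : {set 'I_n}) :
  \sum_j ((j \in I)%:R : R) = #|I|%:R.
Proof.
rewrite -sumr_const [RHS]big_mkcond; apply: eq_bigr => j _; by case: (j \in I).
Qed.

Lemma int01 (R : realType) n (z : 'I_n -> int) k :
  \sum_j ((z j)%:~R ^+ 2 : R) = k%:R -> \sum_j ((z j)%:~R : R) = k%:R ->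
  exists I : {set 'I_n}, #|I| = k /\ forall j, ((z j)%:~R : R) = (j \in I)%:R.
Proof.
move=> h2 h1.
have h0 : \sum_j ((z j * (z j - 1))%:~R : R) = 0.
  rewrite -[RHS](subrr (k%:R : R)) -{1}h2 -h1 -sumrB; apply: eq_bigr => j _.
  by rewrite intrM intrB /=; ring.
have hz : forall j, z j * (z j - 1) = 0.
  move=> j; apply/eqP; rewrite -(intr_eq0 R); apply/eqP.
  move: j (erefl true); apply: (psumr_eq0P _ h0) => j _.
  rewrite ler0z; have [hj|hj] := lerP (z j) 0.
    by apply: mulr_le0; lia.
  by apply: mulr_ge0; lia.
exists (finset (fun j => z j == 1)); split; last first.
  move=> j; rewrite inE; have := hz j.
  case/eqP; rewrite mulf_eq0 subr_eq0 => /orP [/eqP -> | /eqP ->] //.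
apply/eqP; rewrite -(eqr_nat R) -card_sum -h1; apply/eqP; apply: eq_bigr => j _.
rewrite inE; have := hz j.
move/eqP; rewrite mulf_eq0 subr_eq0 => /orP [/eqP -> | /eqP ->] //.
Qed.
Definition shift (R : realType) n (S : set 'cV[R]_n) (v : 'cV[R]_n) :=
  [set x + v | x in S].

Lemma shiftP (R : realType) n (S : set 'cV[R]_n) v x :
  shift S v x <-> S (x - v).
Proof.
split; first by case=> y Sy <-; rewrite addrK.
by move=> h; exists (x - v) => //; rewrite subrK.
Qed.

Lemma shiftK (R : realType) n (S : set 'cV[R]_n) v :
  shift (shift S v) (- v) = S.
Proof.
by apply/seteqP; split => x; rewrite /= shiftP shiftP opprK addrK.
Qed.

Lemma is_face_shift (R : realType) n (P F : set 'cV[R]_n) v :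
  is_face P F -> is_face (shift P v) (shift F v).
Proof.
case=> w [c [hP ->]]; exists w, (c + (w^T *m v) 0 0).
have L : forall y, (w^T *m (y - v)) 0 0 = (w^T *m y) 0 0 - (w^T *m v) 0 0.
  by move=> y; rewrite mulmxBr !mxE.
split.
  move=> x /shiftP /hP; rewrite L => h; lra.
apply/seteqP; split => x; rewrite /= !shiftP /= L.
  case=> h1 h2; split => //; lra.
case=> h1 h2; split => //; lra.
Qed.

Lemma comb_equiv_shift (R : realType) n (P : set 'cV[R]_n) v :
  comb_equiv P (shift P v).
Proof.
exists (fun F => shift F v); split.
- by move=> F; apply: is_face_shift.
- move=> G hG; exists (shift G (- v)).
    by rewrite -(shiftK P v); apply: is_face_shift.
  by rewrite -{2}(shiftK G (- v)) opprK.
- move=> F1 F2 _ _; split.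
    by move=> h x /shiftP /h /shiftP.
  move=> h x hx; have : shift F2 v (x + v) by apply: h; apply/shiftP; rewrite addrK.
  by move/shiftP; rewrite addrK.
Qed.

Lemma comb_shift (R : realType) n (s : seq 'cV[R]_n) (w : seq R) v :
  size w = size s -> \sum_(t <- w) t = 1 ->
  \sum_(i < size (map (fun y => y + v) s)) w`_i *: (map (fun y => y + v) s)`_i
  = \sum_(i < size s) w`_i *: s`_i + v.
Proof.
move=> hs h1; rewrite size_map.
have -> : \sum_(i < size s) w`_i *: (map (fun y => y + v) s)`_i =
          \sum_(i < size s) (w`_i *: s`_i + w`_i *: v).
  by apply: eq_bigr => i _; rewrite (nth_map 0 0) // scalerDr.
rewrite big_split /= -scaler_suml.
suff -> : \sum_(i < size s) w`_i = 1 by rewrite scale1r.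
by rewrite -hs -h1 (big_nth 0) big_mkord.
Qed.

Lemma conv_shift (R : realType) n (S : set 'cV[R]_n) v :
  conv (shift S v) = shift (conv S) v.
Proof.
apply/seteqP; split => x.
  case=> s [w [hs hS hw h1 ->]].
  apply/shiftP; exists (map (fun y => y + (- v)) s), w; split.
  - by rewrite size_map.
  - by move=> y /mapP [y' /hS /shiftP hy ->].
  - exact: hw.
  - exact: h1.
  - by rewrite comb_shift // ?size_map.
case/shiftP=> s [w [hs hS hw h1 hx]].
exists (map (fun y => y + v) s), w; split.
- by rewrite size_map.
- by move=> y /mapP [y' /hS hy ->]; apply/shiftP; rewrite addrK.
- exact: hw.
- exact: h1.
- by rewrite comb_shift // -hx subrK.
Qed.

Lemma mxsub (R : realType) n (A B : 'cV[R]_n) j : (A - B) j 0 = A j 0 - B j 0.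
Proof. by rewrite !mxE. Qed.

Lemma card_cls (T : finType) (f : pred T) : #|[set i | f i]| = #|finset f|.
Proof. by apply: eq_card => i; rewrite inE /in_set /in_mem /= asboolb. Qed.

Lemma gens_shift (R : realType) g k (a : 'cV[R]_g) :
  (1 <= k <= g)%N -> kclass R g k a ->
  exists u, [set x | exists I : {set 'I_g.+1}, #|I| = k /\
                  x = \col_(i < g.+1) ((i \in I)%:R : R)] =
            shift [set (Bmat R g)^T *m intvec R c | c in calD a (Qmat R g)] u.
Proof.
move=> /andP [hk1 hkg] [ha1 ha2].
set kap : R := k%:R / g.+1%:R.
have hn : g.+1%:R != 0 :> R by rewrite pnatr_eq0.
have hhi : (g.+1 - k)%:R / g.+1%:R = 1 - kap :> R.
  rewrite natrB; last by lia.
  by rewrite /kap; field; rewrite addrC natr1.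
rewrite hhi in ha1 ha2; rewrite card_cls in ha2.
set m := #|finset _| in ha2.
have ha : forall i, a i 0 = (a i 0 == 1 - kap)%:R - kap.
  move=> i; case: (ha1 i) => ->.
    have -> : (- kap == 1 - kap) = false.
      apply/negbTE/eqP => h; lra.
    by rewrite sub0r.
  by rewrite eqxx.
have hm : \sum_i ((a i 0 == 1 - kap)%:R : R) = m%:R.
  by rewrite -card_sum; apply: eq_bigr => i _; rewrite inE.
pose S : {set 'I_g.+1} := finset (fun j =>
  if unlift ord0 j is Some i then a i 0 == 1 - kap else m != k).
pose u : 'cV[R]_g.+1 := \col_j ((j \in S)%:R : R).
have uS : forall i, u (lift ord0 i) 0 = (a i 0 == 1 - kap)%:R.
  by move=> i; rewrite mxE inE liftK.
have u0 : u ord0 0 = (m != k)%:R.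
  by rewrite mxE inE unlift_none.
have hp : forall j, ((Bmat R g)^T *m a) j 0 = kap - u j 0.
  move=> j; case: (unliftP ord0 j) => [i ->|->].
    by rewrite BTS uS {1}ha; ring.
  rewrite BT0 u0 (eq_bigr _ (fun i _ => ha i)) sumrB hm sumr_const card_ord.
  rewrite -[_ *+ g]mulr_natr /kap.
  case: ha2 => ->.
    rewrite eqxx /=; field; by rewrite addrC natr1.
  have -> : (k.-1 != k) = true by lia.
  have ek : (k%:R : R) = k.-1%:R + 1 by rewrite natr1 prednK.
  rewrite ek /= -[g.+1%:R]natr1; field; by rewrite natr1.
have usum : \sum_j u j 0 = k%:R.
  rewrite big_ord_recl u0 (eq_bigr _ (fun i _ => uS i)) hm.
  case: ha2 => ->; first by rewrite eqxx add0r.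
  have -> : (k.-1 != k) = true by lia.
  by rewrite /= addrC natr1 prednK.
have usq : \sum_j (u j 0)^+2 = k%:R.
  rewrite -usum; apply: eq_bigr => j _; rewrite mxE.
  by case: (j \in S); rewrite /= ?expr1n ?expr0n.
have hD : forall c, calD a (Qmat R g) c <->
    \sum_j (((Bmat R g)^T *m intvec R c) j 0 + u j 0)^+2 = k%:R.
  move=> c; rewrite /calD /= !qformE mulmxBr.
  have -> : \sum_j (((Bmat R g)^T *m a - (Bmat R g)^T *m intvec R c) j 0)^+2 =
      \sum_j (((Bmat R g)^T *m a) j 0 - ((Bmat R g)^T *m intvec R c) j 0)^+2.
    by apply: eq_bigr => j _; rewrite mxsub.
  rewrite (core hp (BTsum _)) usq; done.
exists u; apply/seteqP; split => x.
  case=> I [hI ->]; apply/shiftP.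
  pose c : 'cV[int]_g :=
    \col_i ((lift ord0 i \in S)%:Z - (lift ord0 i \in I)%:Z).
  have hd : forall j, ((Bmat R g)^T *m intvec R c) j 0 + u j 0 = (j \in I)%:R.
    move=> j; case: (unliftP ord0 j) => [i ->|->].
      rewrite BTS !mxE intrB /=; ring.
    rewrite BT0.
    have e1 := usum; rewrite big_ord_recl in e1.
    have e2 := card_sum R I; rewrite hI big_ord_recl in e2.
    rewrite (eq_bigr (fun i => u (lift ord0 i) 0 - ((lift ord0 i \in I)%:R))); last first.
      by move=> i _; rewrite !mxE intrB.
    rewrite sumrB; lra.
  exists c.
    apply/hD; rewrite (eq_bigr _ (fun j _ => congr1 (fun t => t ^+ 2) (hd j))).
    rewrite -hI -card_sum; apply: eq_bigr => j _.
    by case: (j \in I); rewrite ?expr1n ?expr0n.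
  apply/matrixP => j l; rewrite (ord1 l) mxsub.
  have -> : (\col_i ((i \in I)%:R : R)) j 0 = (j \in I)%:R by rewrite mxE.
  by rewrite -(hd j) addrK.
case/shiftP => c hc hy.
pose z : 'I_g.+1 -> int := fun j => match unlift ord0 j with
  | Some i => - c i 0 + (a i 0 == 1 - kap)%:Z
  | None => \sum_i c i 0 + (m != k)%:Z end.
have hz : forall j, ((z j)%:~R : R) = ((Bmat R g)^T *m intvec R c) j 0 + u j 0.
  move=> j; rewrite /z; case: (unliftP ord0 j) => [i ->|->].
    by rewrite BTS uS mxE intrD intrN.
  rewrite BT0 u0 intrD rmorph_sum; congr (_ + _); apply: eq_bigr => i _.
  by rewrite mxE.
have [I [hI hIz]] : exists I : {set 'I_g.+1}, #|I| = k /\ forall j, ((z j)%:~R : R) = (j \in I)%:R.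
  apply: int01.
    rewrite -(hD c).1 //; apply: eq_bigr => j _; by rewrite hz.
  by rewrite (eq_bigr _ (fun j _ => hz j)) big_split /= BTsum usum add0r.
exists I; split => //; apply/matrixP => j l; rewrite (ord1 l) mxE -hIz hz.
by rewrite hy mxsub subrK.
Qed.

Local Close Scope classical_set_scope.

Theorem theorem3p5 (R : realType) (g k : nat) (a : 'cV[R]_g) :
  (1 <= g)%N -> (1 <= k <= g)%N -> kclass R g k a ->
  comb_equiv (BT_D a) (hypersimplex R k g.+1).
Proof.
move=> _ hk ha; have [u hu] := gens_shift hk ha.
by rewrite /hypersimplex hu conv_shift; apply: comb_equiv_shift.
Qed.
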